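(* Let $W$ be an eventually periodic subset of $\mathbb{Z}^d$ with periods $u_1,\dots,u_d$, and let $\mathscr{W}_1,\mathcal{W}$ be as defined in the context. If the ordered pair $(\pi(\mathscr{W}_1),\pi(\mathcal{W}))$ admits a minimal complement in $\mathbb{Z}^d/\mathcal{L}$, then $W$ has a minimal complement in $\mathbb{Z}^d$.
   Context: $d\geqslant1$, $\mathbb{N}=\{0,1,2,\dots\}$. Let $u_1,\dots,u_d\in\mathbb{Z}^d$ satisfy no nontrivial $\mathbb{Z}$-linear relation, $\mathcal{L}=\mathbb{Z}u_1+\dots+\mathbb{Z}u_d$, $P=\mathbb{N}u_1+\dots+\mathbb{N}u_d$, $\pi:\mathbb{Z}^d\to\mathbb{Z}^d/\mathcal{L}$ the quotient map. A nonempty $X\subseteq\mathbb{Z}^d$ is eventually periodic with periods $u_1,\dots,u_d$ if $X\subseteq F+P$ for some nonempty finite $F\subseteq\mathbb{Z}^d$ and $x+P\subseteq X$ for all but finitely many $x\in X$. For such $W$: $\mathscr{W}=\{w\in W:w+P\not\subseteq W\}$; $\mathcal{W}=\{w\in W\setminus\mathscr{W}:(w-P)\cap(W\setminus\mathscr{W})=\{w\}\}$; $\mathscr{W}_1$ is the set of elements of $\mathscr{W}$ congruent modulo $\mathcal{L}$ to no element of $\mathcal{W}$. An ordered pair $(\mathscr{Q}_1,\mathcal{Q})$ of two nonempty disjoint subsets of $\mathbb{Z}^d/\mathcal{L}$ admits a minimal complement in $\mathbb{Z}^d/\mathcal{L}$ if there is a nonempty $\mathcal{N}\subseteq\mathbb{Z}^d/\mathcal{L}$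 with (i) $\mathcal{N}+(\mathcal{Q}\cup\mathscr{Q}_1)=\mathbb{Z}^d/\mathcal{L}$ and (ii) for every $n\in\mathcal{N}$ there is $q\in\mathscr{Q}_1$ with $n+q\neq n'+q'$ for all $n'\in\mathcal{N}\setminus\{n\}$, $q'\in\mathcal{Q}\cup\mathscr{Q}_1$. A nonempty $M\subseteq\mathbb{Z}^d$ is a complement of $W$ if $M+W=\mathbb{Z}^d$, and a minimal complement if no proper subset of $M$ is a complement of $W$. *)

(* Defs.v *)
From HB Require Import structures.
From mathcomp Require Import all_boot all_order all_algebra.
Set Implicit Arguments. Unset Strict Implicit. Unset Printing Implicit Defensive.
Import GRing.Theory Num.Theory.
Local Open Scope ring_scope.

Definition vec (d : nat) := 'rV[int]_d.

Definition Zindep (d : nat) (u : 'I_d -> vec d) : Prop :=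
  forall c : 'I_d -> int, \sum_(i < d) c i *: u i = 0 -> forall i, c i = 0.

Definition inL (d : nat) (u : 'I_d -> vec d) (x : vec d) : Prop :=
  exists c : 'I_d -> int, x = \sum_(i < d) c i *: u i.

Definition inP (d : nat) (u : 'I_d -> vec d) (x : vec d) : Prop :=
  exists c : 'I_d -> nat, x = \sum_(i < d) (c i)%:Z *: u i.

Definition eventually_periodic (d : nat) (u : 'I_d -> vec d) (X : vec d -> Prop)
  : Prop :=
  (exists x, X x) /\
  (exists F : seq (vec d), F != [::] /\
     forall x, X x -> exists2 f, f \in F & exists p, inP u p /\ x = f + p) /\
  (exists E : seq (vec d),
     forall x, X x -> x \notin E -> forall p, inP u p -> X (x + p)).

Definition scrW (d : nat) (u : 'I_d -> vec d) (W : vec d -> Prop) (w : vec d)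
  : Prop :=
  W w /\ ~ (forall p, inP u p -> W (w + p)).

Definition calW (d : nat) (u : 'I_d -> vec d) (W : vec d -> Prop) (w : vec d)
  : Prop :=
  (W w /\ ~ scrW u W w) /\
  forall p, inP u p -> W (w - p) -> ~ scrW u W (w - p) -> w - p = w.

Definition scrW1 (d : nat) (u : 'I_d -> vec d) (W : vec d -> Prop) (w : vec d)
  : Prop :=
  scrW u W w /\ ~ (exists v, calW u W v /\ inL u (w - v)).

Definition img (A B : Type) (f : A -> B) (S : A -> Prop) : B -> Prop :=
  fun b => exists2 a, S a & f a = b.

Definition admits_min_compl (G : zmodType) (Q1 Q : G -> Prop) : Prop :=
  (exists q, Q1 q) /\ (exists q, Q q) /\ (forall q, Q1 q -> ~ Q q) /\
  exists N : G -> Prop,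
    (exists n, N n) /\
    (forall g, exists n q, N n /\ (Q q \/ Q1 q) /\ g = n + q) /\
    (forall n, N n -> exists2 q, Q1 q &
       forall n' q', N n' -> n' <> n -> (Q q' \/ Q1 q') -> n + q <> n' + q').

Definition is_complement (d : nat) (M W : vec d -> Prop) : Prop :=
  (exists m, M m) /\ forall z, exists m w, M m /\ W w /\ z = m + w.

Definition is_min_complement (d : nat) (M W : vec d -> Prop) : Prop :=
  is_complement M W /\
  forall M' : vec d -> Prop, (forall x, M' x -> M x) -> is_complement M' W ->
    forall x, M x -> M' x.

(* Main.v *)
Require Import Defs.
From HB Require Import structures.
From mathcomp Require Import all_boot all_order all_algebra.
From mathcomp Require Import ring lra zify.
From Stdlib Require Import Classical ClassicalEpsilon.
Set Implicit Arguments. Unset Strict Implicit. Unset Printing Implicit Defensive.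
Import Order.TTheory GRing.Theory Num.Theory.
Local Open Scope ring_scope.

Lemma det_lemma (d : nat) (u : 'I_d -> 'rV[int]_d) :
  Zindep u -> exists D : nat, (0 < D)%N /\ forall x, inL u (D%:Z *: x).
Proof.
move=> hind.
pose U := \matrix_(i < d) u i.
have hU c : c *m U = \sum_i c 0 i *: u i.
  by rewrite mulmx_sum_row; apply: eq_bigr => i _; rewrite rowK.
have hdet : \det U != 0.
  apply/negP => /eqP h0.
  pose U' := map_mx (intr : int -> rat) U.
  have hd' : \det U' = 0 by rewrite det_map_mx h0 rmorph0.
  have nf : ~~ row_free U' by rewrite row_free_unit unitmxE unitfE hd' eqxx.
  rewrite -kermx_eq0 in nf.
  have [i [j hij]] : exists i j, kermx U' i j != 0.
    apply: NNPP => h; move/negP: nf; apply; apply/eqP/matrixP => i j.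
    rewrite [RHS]mxE; apply: NNPP => h'; apply: h; exists i; exists j; apply/eqP; exact: h'.
  pose v := row i (kermx U').
  have hv : v *m U' = 0 by rewrite /v -row_mul mulmx_ker row0.
  have hvj : v 0 j != 0 by rewrite /v mxE.
  clearbody v.
  pose dl k := \prod_(l | l != k) denq (v 0 l).
  pose c := \row_k (numq (v 0 k) * dl k).
  have hc : map_mx intr c = (\prod_l denq (v 0 l))%:~R *: v.
    apply/rowP => k; rewrite !mxE (bigD1 k) //= /dl.
    rewrite intrM intrM numqE; ring.
  have hcU : c *m U = 0.
    apply/rowP => k; rewrite [RHS]mxE; apply/eqP; rewrite -(intr_eq0 rat).
    have := congr1 (fun A : 'rV[rat]_d => A 0 k) (map_mxM intr c U).
    rewrite hc -scalemxAl hv scaler0 [X in X = _]mxE => ->.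
    by rewrite mxE.
  have := hind (fun i => c 0 i); rewrite -hU hcU => /(_ erefl j) /eqP.
  rewrite mxE; apply/negP; rewrite mulf_neq0 //; first by rewrite numq_eq0.
  by apply/prodf_neq0 => l _; exact: denq_neq0.
have hL y : inL u (\det U *: y).
  exists (fun i => (y *m \adj U) 0 i).
  by rewrite -hU -mulmxA mul_adj_mx mul_mx_scalar.
exists `|\det U|%N; split; first by rewrite absz_gt0.
move=> x; rewrite abszE.
have [h|h] := ltP (\det U) 0.
  rewrite ltr0_norm // scaleNr.
  have [c hc] := hL x; exists (fun i => - c i).
  by rewrite hc -sumrN; apply: eq_bigr => i _; rewrite scaleNr.
by rewrite ger0_norm //; exact: hL.
Qed.

Lemma min_card (T : finType) (P : {set T} -> Prop) B :
  P B -> exists B0, P B0 /\ forall B', P B' -> (#|B0| <= #|B'|)%N.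
Proof.
move=> PB; move: {2}#|B| (leqnn #|B|) => n; elim: n B PB => [|n IH] B PB hB.
  exists B; split => // B' _; move: hB; rewrite leqn0 => /eqP ->; exact: leq0n.
case: (classic (exists B', P B' /\ (#|B'| < #|B|)%N)) => [[B' [PB' hB']]|hno].
  by apply: (IH B') => //; rewrite -ltnS; exact: leq_trans hB' hB.
exists B; split => // B' PB'; rewrite leqNgt; apply/negP => h; apply: hno; by exists B'.
Qed.

Lemma max_nat (S : nat -> Prop) k0 bd :
  S k0 -> (forall k, S k -> (k <= bd)%N) -> exists k, S k /\ forall k', S k' -> (k' <= k)%N.
Proof.
move=> Sk0 hbd; move: {2}(bd - k0)%N (leqnn (bd - k0)) => n.
elim: n k0 Sk0 => [|n IH] k0 Sk0 hn.
  exists k0; split => // k' Sk'; have := hbd _ Sk'; have := hbd _ Sk0; lia.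
case: (classic (exists k', S k' /\ (k0 < k')%N)) => [[k' [Sk' hk']]|hno].
  apply: (IH k') => //; have := hbd _ Sk'; lia.
exists k0; split => // k' Sk'; rewrite leqNgt; apply/negP => h; apply: hno; by exists k'.
Qed.

Lemma indep_nat d (u : 'I_d -> 'rV[int]_d) (a b : 'I_d -> nat) :
  Zindep u -> \sum_i (a i)%:Z *: u i = \sum_i (b i)%:Z *: u i -> forall i, a i = b i.
Proof.
move=> hind h i.
have := hind (fun i => (a i)%:Z - (b i)%:Z).
have -> : \sum_i ((a i)%:Z - (b i)%:Z) *: u i = 0.
  by rewrite (eq_bigr (fun i => (a i)%:Z *: u i - (b i)%:Z *: u i)) ?sumrB ?h ?subrr // => j _; rewrite scalerBl.
by move=> /(_ erefl i) /eqP; rewrite subr_eq0 => /eqP [].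
Qed.

Lemma sum_addP d (u : 'I_d -> 'rV[int]_d) (a b : 'I_d -> nat) :
  \sum_i ((a i + b i)%N)%:Z *: u i = \sum_i (a i)%:Z *: u i + \sum_i (b i)%:Z *: u i.
Proof. by rewrite -big_split; apply: eq_bigr => i _; rewrite PoszD scalerDl. Qed.

Lemma bound_list d (u : 'I_d -> 'rV[int]_d) (w : 'rV[int]_d) (F : seq 'rV[int]_d) :
  Zindep u -> exists Bd, forall f, f \in F -> forall g : 'I_d -> nat,
    w - f = \sum_i (g i)%:Z *: u i -> (\sum_i g i <= Bd)%N.
Proof.
move=> hind; elim: F => [|f F [Bd' hBd']]; first by exists 0%N.
case: (classic (exists g0 : 'I_d -> nat, w - f = \sum_i (g0 i)%:Z *: u i)) => [[g0 hg0]|hno].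
  exists (Bd' + \sum_i g0 i)%N => f'; rewrite inE => /orP [/eqP ->|hf'] g hg.
    have eg := indep_nat hind (etrans (esym hg) hg0).
    by rewrite (eq_bigr _ (fun i _ => eg i)) leq_addl.
  exact: leq_trans (hBd' _ hf' _ hg) (leq_addr _ _).
exists Bd' => f'; rewrite inE => /orP [/eqP ->|hf'] g hg.
  by exfalso; apply: hno; exists g.
exact: hBd' _ hf' _ hg.
Qed.

Lemma calW_exists d (u : 'I_d -> 'rV[int]_d) (W : 'rV[int]_d -> Prop) (F : seq 'rV[int]_d) :
  Zindep u ->
  (forall x, W x -> exists2 f, f \in F & exists p, inP u p /\ x = f + p) ->
  forall w, W w -> ~ scrW u W w -> exists v, calW u W v /\ inP u (w - v).
Proof.
move=> hind hF w Ww nsw.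
have [Bd hBd] := bound_list w F hind.
pose S k := exists x (c : 'I_d -> nat), [/\ W x, ~ scrW u W x,
   w - x = \sum_i (c i)%:Z *: u i & \sum_i c i = k].
have S0 : S 0%N.
  exists w, (fun _ => 0%N); split => //; last by rewrite big1.
  by rewrite subrr big1 // => i _; rewrite scale0r.
have Sbd k : S k -> (k <= Bd)%N.
  move=> [x [c [Wx _ hx <-]]].
  have [f hf [p [[e hp] hxe]]] := hF x Wx.
  rewrite hxe hp in hx.
  apply: leq_trans (hBd f hf (fun i => (c i + e i)%N) _).
    by rewrite big_split /= leq_addr.
  by rewrite sum_addP -hx; rewrite opprD addrA subrK.
have [k [[x [c [Wx nsx hx hk]]] kmax]] := max_nat S0 Sbd.
exists x; split; last by exists c.
split => // p [e ->] Wxp nsxp.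
have hS : S (k + \sum_i e i)%N.
  exists (x - \sum_i (e i)%:Z *: u i), (fun i => (c i + e i)%N); split => //.
    rewrite sum_addP -hx; set s := \sum_i _ *: _; rewrite opprB addrA.
    by rewrite addrAC.
  by rewrite big_split /= hk.
have := kmax _ hS; rewrite -[X in (_ <= X)%N]addn0 leq_add2l leqn0 => /eqP he.
have e0 i : e i = 0%N.
  by move: he => /eqP; rewrite sum_nat_eq0 => /forallP /(_ i) /eqP.
by rewrite big1 ?subr0 // => i _; rewrite e0 scale0r.
Qed.

Definition congK d (T : nat) (x y : 'rV[int]_d) := forall j, (T%:Z %| (x - y) ord0 j)%Z.
Definition rho d (T : nat) (x : 'rV[int]_d) : {ffun 'I_d -> 'I_T.-1.+1} :=
  [ffun j => inord (absz ((x ord0 j) %% T%:Z)%Z)].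

Lemma mod_bound (a : int) (T : nat) : (0 < T)%N -> (absz (a %% T%:Z)%Z < T.-1.+1)%N.
Proof.
move=> hT; rewrite prednK //.
have h1 : (0 < T%:Z) by []. have := ltz_pmod a h1.
have h2 : T%:Z != 0 by rewrite eqz_nat -lt0n.
have := modz_ge0 a h2. lia.
Qed.

Lemma mod_nonneg (a : int) (T : nat) : (0 < T)%N -> 0 <= (a %% T%:Z)%Z.
Proof. by move=> hT; apply: modz_ge0; rewrite eqz_nat -lt0n. Qed.

Lemma rho_eq d T (x y : 'rV[int]_d) : (0 < T)%N -> rho T x = rho T y <-> congK T x y.
Proof.
move=> hT; split.
  move=> h j; have := congr1 (fun f : {ffun _ -> _} => val (f j)) h; rewrite /rho !ffunE /=.
  rewrite !inordK ?mod_bound // => habs.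
  rewrite !mxE -eqz_mod_dvd; apply/eqP.
  by rewrite -(gez0_abs (mod_nonneg _ hT)) habs gez0_abs ?mod_nonneg.
move=> h; apply/ffunP => j; rewrite /rho !ffunE; congr inord.
by have := h j; rewrite !mxE -eqz_mod_dvd => /eqP ->.
Qed.

Lemma congK_E d (R T : nat) (x y : 'rV[int]_d) : (2 * R < T)%N ->
  (forall j, absz (x ord0 j) <= R)%N -> (forall j, absz (y ord0 j) <= R)%N ->
  congK T x y -> x = y.
Proof.
move=> hRT hx hy h; apply/rowP => j; have := h j; rewrite !mxE dvdzE => hd.
have hxj := hx j; have hyj := hy j.
case: (posnP (absz (x ord0 j - y ord0 j))) => [/eqP|hpos].
  by rewrite absz_eq0 subr_eq0 => /eqP.
have := dvdn_leq hpos hd; lia.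
Qed.

Lemma congK_P d (u : 'I_d -> 'rV[int]_d) T y : (0 < T)%N ->
  inL u y -> exists p, inP u p /\ congK T y p.
Proof.
move=> hT [c ->].
exists (\sum_i (absz (c i %% T%:Z)%Z)%:Z *: u i); split; first by eexists.
rewrite /congK.
have -> : \sum_i c i *: u i - \sum_i (absz (c i %% T%:Z)%Z)%:Z *: u i
   = T%:Z *: \sum_i (c i %/ T%:Z)%Z *: u i.
  rewrite -sumrB scaler_sumr; apply: eq_bigr => i _.
  rewrite gez0_abs ?mod_nonneg // -scalerBl scalerA; congr (_ *: _).
  by rewrite {1}(divz_eq (c i) T%:Z) addrK mulrC.
by move=> j; rewrite mxE dvdz_mulr.
Qed.

Lemma congK_L d (u : 'I_d -> 'rV[int]_d) (D K : nat) (x y : 'rV[int]_d) :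
  (forall x, inL u (D%:Z *: x)) -> congK (D * K) x y -> inL u (x - y).
Proof.
move=> hD h.
have -> : x - y = D%:Z *: (K%:Z *: \row_j (((x - y) ord0 j) %/ (D * K)%N%:Z)%Z).
  apply/rowP => j; rewrite scalerA -PoszM !mxE.
  rewrite mulrC divzK //; move: (h j); rewrite !mxE; exact: id.
exact: (hD (K%:Z *: _)).
Qed.

Definition asb (P : Prop) : bool := if excluded_middle_informative P then true else false.
Lemma asbP (P : Prop) : asb P <-> P.
Proof. by rewrite /asb; case: excluded_middle_informative. Qed.

Lemma helperZ (V : zmodType) (a b c : V) : a + b + (c - a) = c + b.
Proof. by rewrite addrC addrA subrK. Qed.

(* The quotient Z^d / L is represented by any abelian group G together with a
   surjective additive map pi : Z^d -> G whose kernel is exactly L. *)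
Theorem lemma4p17 (d : nat) (u : 'I_d -> 'rV[int]_d) (G : zmodType)
  (pi : 'rV[int]_d -> G) (W : 'rV[int]_d -> Prop) :
  (0 < d)%N ->
  Zindep u ->
  (forall x y, pi (x + y) = pi x + pi y) ->
  (forall g, exists x, pi x = g) ->
  (forall x, pi x = 0 <-> inL u x) ->
  eventually_periodic u W ->
  admits_min_compl (img pi (scrW1 u W)) (img pi (calW u W)) ->
  exists M : 'rV[int]_d -> Prop, is_min_complement M W.
Proof.
move=> hd hind hpiD hpisurj hpiL [[x0 Wx0] [[F [_ hF]] [E hE]]]
  [_ [_ [_ [N [_ [hcov huniq]]]]]].
have hpi0 : pi 0 = 0.
  have h := hpiD 0 0; rewrite addr0 in h.
  by apply: (addrI (pi 0)); rewrite -h addr0.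
have hpiN x : pi (- x) = - pi x.
  have h := hpiD x (- x); rewrite subrr hpi0 in h.
  by apply: (addrI (pi x)); rewrite -h subrr.
have hpiB x y : pi (x - y) = pi x - pi y by rewrite hpiD hpiN.
have piE x y : pi x = pi y <-> inL u (x - y).
  split => h; first by apply/hpiL; rewrite hpiB h subrr.
  by apply/eqP; rewrite -subr_eq0 -hpiB; apply/eqP/hpiL.
have inP_inL p : inP u p -> inL u p.
  by case=> c ->; exists (fun i => (c i)%:Z).
have scrW_E x : scrW u W x -> x \in E.
  move=> [Wx nall]; apply: NNPP => /negP hx; apply: nall => p hp.
  exact: hE x Wx hx p hp.
have L2 w : W w -> (exists v, calW u W v /\ pi v = pi w) \/ scrW1 u W w.
  move=> Ww; case: (classic (scrW u W w)) => sw.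
    case: (classic (exists v, calW u W v /\ inL u (w - v))) => [[v [cv hv]]|hno].
      by left; exists v; split => //; symmetry; apply/piE.
    by right; split.
  have [v [cv hv]] := calW_exists hind hF Ww sw.
  by left; exists v; split => //; symmetry; apply/piE; exact: inP_inL.
have piW w : W w -> img pi (calW u W) (pi w) \/ img pi (scrW1 u W) (pi w).
  by case/L2 => [[v [cv hv]]|s1]; [left; exists v | right; exists w].
have L1 s w' : scrW1 u W s -> W w' -> pi w' = pi s -> w' \in E.
  move=> [ss hs] Ww' he; case: (L2 _ Ww') => [[v [cv hv]]|s1]; last exact: scrW_E s1.1.
  by exfalso; apply: hs; exists v; split => //; apply/piE; rewrite hv he.
have bnd (E' : seq 'rV[int]_d) :
    exists R : nat, forall e, e \in E' -> forall j, (absz (e ord0 j) <= R)%N.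
  elim: E' => [|e E' [R' hR']]; first by exists 0%N.
  exists (R' + \sum_j absz (e ord0 j))%N => e'; rewrite inE => /orP [/eqP -> j|he j].
    by rewrite (bigD1 j) //= addnCA leq_addr.
  exact: leq_trans (hR' _ he j) (leq_addr _ _).
have [R hR] := bnd E.
have [D [hD0 hD]] := det_lemma hind.
pose T := (D * (2 * R).+1)%N.
have hT : (0 < T)%N by rewrite muln_gt0 hD0.
have hRT : (2 * R < T)%N by exact: leq_pmull.
have rhoE (x y : 'rV[int]_d) : rho T x = rho T y <-> congK T x y := rho_eq x y hT.
have rho_pi x y : rho T x = rho T y -> pi x = pi y.
  by move/rhoE => h; apply/piE; exact: congK_L hD h.
have Esep x y : x \in E -> y \in E -> congK T x y -> x = y.
  by move=> hx hy; apply: congK_E hRT (hR x hx) (hR y hy).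
pose Good (B : {set {ffun 'I_d -> 'I_T.-1.+1}}) :=
  (forall x, rho T x \in B -> N (pi x)) /\
  (forall z, exists m w, [/\ rho T m \in B, W w & z = m + w]).
pose B0 := [set h | asb (exists x, rho T x = h /\ N (pi x))].
have G0 : Good B0.
  split.
    move=> x; rewrite inE => /asbP [x' [hx' hN]].
    by rewrite -(rho_pi _ _ hx').
  move=> z; have [n [q [hn [hq hz]]]] := hcov (pi z).
  have [w Ww hw] : exists2 w, W w & pi w = q.
    by case: hq => [[w cw hw]|[w sw hw]]; exists w => //; [exact: cw.1.1 | exact: sw.1.1].
  exists (z - w), w; split => //; last by rewrite subrK.
  rewrite inE; apply/asbP; exists (z - w); split => //.
  by rewrite hpiB hz hw addrK.
have [B [GB Bmin]] := min_card G0.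
have Key x : rho T x \in B ->
    exists w, W w /\ forall m' w', rho T m' \in B -> W w' -> x + w = m' + w' -> m' = x.
  move=> hx.
  have nG : ~ Good (B :\ rho T x).
    move=> G'; have := Bmin _ G'.
    by rewrite (cardsD1 (rho T x) B) hx add1n ltnn.
  have [z hz] : exists z, forall m w, rho T m \in B :\ rho T x -> W w -> z <> m + w.
    apply: NNPP => hno; apply: nG; split.
      by move=> y; rewrite in_setD1 => /andP [_ hy]; exact: GB.1 y hy.
    move=> z; apply: NNPP => hz; apply: hno; exists z => m w hm Ww hzm.
    by apply: hz; exists m, w; split.
  have [m1 [w1 [hm1 Ww1 ez]]] := GB.2 z.
  have rm1 : rho T m1 = rho T x.
    apply: NNPP => hne; apply: (hz m1 w1) => //.
    by rewrite in_setD1 hm1 andbT; apply/eqP.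
  have FS s m' w' : scrW1 u W s -> W w' -> rho T m' = rho T x -> x + s = m' + w' -> m' = x.
    move=> ss Ww' rm' e.
    have ck : congK T x m' by apply/rhoE.
    have ew : w' = x + s - m' by rewrite e addrC addKr.
    have ck' : congK T w' s by move=> j; rewrite ew addrAC addrK; exact: ck j.
    have hpe : pi w' = pi s by apply/piE; exact: congK_L hD ck'.
    have hw' : w' = s := Esep _ _ (L1 _ _ ss Ww' hpe) (scrW_E _ ss.1) ck'.
    by apply: (addIr s); rewrite e hw'.
  case: (L2 _ Ww1) => [[v [cv hv]]|s1].
    have Nx : N (pi x) := GB.1 x hx.
    have [q [s ss hsq] huq] := huniq _ Nx.
    exists s; split; first exact: ss.1.1.
    move=> m' w' hm' Ww' e.
    have pm' : pi m' = pi x.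
      apply: NNPP => hne; have Nm' := GB.1 m' hm'.
      apply: (huq (pi m') (pi w') Nm' hne (piW _ Ww')).
      by rewrite -hsq -!hpiD e.
    apply: (FS s m' w' ss Ww' _ e).
    apply: NNPP => hne.
    pose y := z - v - m'.
    have Ly : inL u y.
      apply/hpiL; rewrite /y !hpiB ez hpiD hv pm' (rho_pi _ _ rm1) addrK subrr //.
    have [p [Pp cp]] := congK_P hT Ly.
    have rz : rho T (z - v - p) = rho T m'.
      by apply/rhoE => j; rewrite addrAC; exact: cp j.
    apply: (hz (z - v - p) (v + p)).
    - rewrite in_setD1 rz hm' andbT; apply/eqP; exact: hne.
    - have [[Wv nsv] _] := cv.
      apply: NNPP => hW; apply: nsv; split => // hall; exact: hW (hall p Pp).
    - by rewrite -[z - v - p]addrA -opprD subrK.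
  exists w1; split => //.
  move=> m' w' hm' Ww' e.
  apply: (FS w1 m' w' s1 Ww' _ e).
  apply: NNPP => hne.
  have rz : rho T (m' + (m1 - x)) = rho T m'.
    apply/rhoE => j; rewrite addrC addKr; have [h1 _] := rhoE m1 x; exact: (h1 rm1 j).
  apply: (hz (m' + (m1 - x)) w').
  - rewrite in_setD1 rz hm' andbT; apply/eqP; exact: hne.
  - exact: Ww'.
  - by rewrite ez addrAC -e helperZ.
exists (fun x => rho T x \in B); split.
  split; first by have [m [w [hm _ _]]] := GB.2 0; exists m.
  by move=> z; have [m [w [hm Ww ez]]] := GB.2 z; exists m, w.
move=> M' hM' [_ hcM'] x hx.
apply: NNPP => hnx.
have [w [Ww huq]] := Key x hx.
have [m' [w' [hm' [Ww' e]]]] := hcM' (x + w).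
have hmx := huq m' w' (hM' _ hm') Ww' e.
by apply: hnx; rewrite -hmx.
Qed.
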